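(* Let $G$ be a graph with no induced $P_7$, $C_4$, $C_6$ or $C_7$. Let $C=v_1-v_2-v_3-v_4-v_5-v_1$ be an induced $C_5$ of $G$ and let $K$ be a component of $G[S_0]$ that is not a clique. Then, with indices modulo $5$: (1) every vertex in $N(K)\cap S(v_{i-2},v_{i+2})$ is complete to $K$; (2) $N(K)\cap S(v_{i-1},v_i,v_{i+1})$ or $N(K)\cap S(v_{i+1},v_{i+2},v_{i+3})$ is empty; (3) if $p,q\in N(K)$ are non-adjacent, then $p\in S(v_{i-1},v_i,v_{i+1})$ and $q\in S(v_{i-2},v_{i+2})$ for some $i$ (after possibly swapping $p$ and $q$); (4) $N(K)$ cannot contain four vertices $p,p',q,q'$ with $p\in S(v_{i-1},v_i,v_{i+1})$, $q\in S(v_{i-2},v_{i+2})$, $p'\in S(v_i,v_{i+1},v_{i+2})$ and $q'\in S(v_{i-2},v_{i-1})$.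
   Context: For $X\subseteq V(C)$, $S(X)$ is the set of vertices $v\in V(G)\setminus V(C)$ with $N(v)\cap V(C)=X$ (set braces are omitted, e.g. $S(v_1,v_2)=S(\{v_1,v_2\})$); $S_0=S(\emptyset)$. $N(K)$ is the set of vertices outside $K$ having a neighbor in $K$. *)

(* Defs.v *)
(* a finite simple graph is a symmetric irreflexive relation
   e on a finType T. *)
From mathcomp Require Import all_boot.
Set Implicit Arguments. Unset Strict Implicit. Unset Printing Implicit Defensive.

Section Defs.
Variables (T : finType) (e : rel T).

Definition induced_path (k : nat) (f : 'I_k -> T) : Prop :=
  injective f /\
  forall i j : 'I_k, e (f i) (f j) = ((val j == (val i).+1) || (val i == (val j).+1)).

Definition induced_cycle (k : nat) (f : 'I_k -> T) : Prop :=
  injective f /\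
  forall i j : 'I_k,
    e (f i) (f j) = ((val j == (val i).+1 %% k) || (val i == (val j).+1 %% k)).

Definition has_induced_path (k : nat) : Prop := exists f : 'I_k -> T, induced_path f.
Definition has_induced_cycle (k : nat) : Prop := exists f : 'I_k -> T, induced_cycle f.

Definition sh (i : 'I_5) (d : nat) : 'I_5 := inord ((val i + d) %% 5).

Variable v : 'I_5 -> T.

Definition VC : {set T} := [set v i | i : 'I_5].

Definition Sset (X : {set T}) : {set T} :=
  [set x | (x \notin VC) && ([set y in VC | e x y] == X)].

Definition S0 : {set T} := Sset set0.

Definition rS0 : rel T := fun a b => [&& e a b, a \in S0 & b \in S0].

Definition is_component_S0 (K : {set T}) : Prop :=
  exists2 x0, x0 \in S0 & K = [set y | connect rS0 x0 y].

Definition is_clique (K : {set T}) : Prop :=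
  forall x y, x \in K -> y \in K -> x != y -> e x y.

Definition NK (K : {set T}) : {set T} :=
  [set x | (x \notin K) && [exists y in K, e x y]].

Definition complete_to (p : T) (K : {set T}) : Prop := forall y, y \in K -> e p y.

Definition S3 (i : 'I_5) : {set T} := Sset [set v (sh i 4); v i; v (sh i 1)].
Definition S2 (i : 'I_5) : {set T} := Sset [set v (sh i 3); v (sh i 2)].

End Defs.

(* Main.v *)
Require Import Defs.
From mathcomp Require Import all_boot.
From Stdlib Require Import FunctionalExtensionality.
Set Implicit Arguments. Unset Strict Implicit. Unset Printing Implicit Defensive.

Section Checker.
Variables (T : finType) (e : rel T) (e_sym : symmetric e) (e_irr : irreflexive e).

Fixpoint okrow (pat : nat -> nat -> bool) (i : nat) (x : T) (j : nat) (s : seq T) : bool :=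
  if s is y :: s' then (e x y == pat i j) && okrow pat i x j.+1 s' else true.
Fixpoint okp pat m s := if s is x :: s' then okrow pat m x m.+1 s' && okp pat m.+1 s' else true.

Lemma okrowP pat i x j s (x0 : T) : okrow pat i x j s -> forall k, k < size s -> e x (nth x0 s k) = pat i (j + k).
Proof.
elim: s j => [|y s IH] j //= /andP [/eqP H1 H2] [|k] Hk /=; first by rewrite addn0.
by rewrite (IH _ H2 k Hk) addSnnS.
Qed.

Lemma okpP pat m s (x0 : T) : okp pat m s -> forall i j, i < j -> j < size s ->
  e (nth x0 s i) (nth x0 s j) = pat (m + i) (m + j).
Proof.
elim: s m => [|x s IH] m //= /andP [H1 H2] [|i] [|j] //= Hij Hj.
- by rewrite (okrowP x0 H1) // addn0 addSnnS.
- by rewrite (IH _ H2 i j) // !addSnnS.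
Qed.

Definition ppat (i j : nat) := (j == i.+1) || (i == j.+1).
Definition cpat (n i j : nat) := (j == i.+1 %% n) || (i == j.+1 %% n).

Lemma mk_adj n pat (s : seq T) (x0 : T) : size s = n -> okp pat 0 s ->
  (forall i j, pat i j = pat j i) -> (forall i, pat i i = false) ->
  forall i j : 'I_n, e (nth x0 s i) (nth x0 s j) = pat i j.
Proof.
move=> Hs H ps pi i j; case: (ltngtP i j) => [lt|gt|eq].
- by rewrite (okpP x0 H) ?Hs.
- by rewrite e_sym (okpP x0 H) ?Hs // ps.
- have -> : i = j by apply: val_inj.
  by rewrite e_irr pi.
Qed.

Definition distinguish n (pat : nat -> nat -> bool) :=
  all (fun i => all (fun j => (i != j) ==> (pat i j || has (fun k => pat i k != pat j k) (iota 0 n))) (iota 0 n)) (iota 0 n).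

Lemma inj_from n (pat : nat -> nat -> bool) (f : 'I_n -> T) : (forall i j : 'I_n, e (f i) (f j) = pat i j) ->
  distinguish n pat -> injective f.
Proof.
move=> A /allP D i j E; apply: val_inj; apply/eqP; apply: contraT => ne.
move: (D i); rewrite mem_iota ltn_ord => /(_ isT) /allP /(_ j); rewrite mem_iota ltn_ord => /(_ isT).
rewrite ne /= => /orP [].
- by rewrite -A E e_irr.
- case/hasP => k; rewrite mem_iota add0n => kn.
  by rewrite -[k]/(val (Ordinal kn)) -!A E eqxx.
Qed.

Lemma mkP7 (x0 : T) (s : seq T) : size s = 7 -> okp ppat 0 s -> has_induced_path e 7.
Proof.
move=> Hs H.
have A := mk_adj x0 Hs H (fun i j => orbC _ _) (fun i => ltac:(by rewrite /ppat orbb; apply/eqP; elim: i)).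
exists (fun i : 'I_7 => nth x0 s i); split => //.
by apply: (inj_from A); vm_compute.
Qed.

Lemma cpat_sym n i j : cpat n i j = cpat n j i. Proof. by rewrite /cpat orbC. Qed.

Lemma mkC n (x0 : T) (s : seq T) : 4 < n -> size s = n -> okp (cpat n) 0 s ->
  all (fun i => ~~ cpat n i i) (iota 0 n) ->
  distinguish n (cpat n) ->
  has_induced_cycle e n.
Proof.
move=> _ Hs H /allP pi' D.
have pi : forall i : 'I_n, cpat n i i = false.
  by move=> i; apply: negbTE; apply: pi'; rewrite mem_iota ltn_ord.
have A : forall i j : 'I_n, e (nth x0 s i) (nth x0 s j) = cpat n i j.
  move=> i j; case: (ltngtP i j) => [lt|gt|eq].
  - by rewrite (okpP x0 H) ?Hs.
  - by rewrite e_sym (okpP x0 H) ?Hs // cpat_sym.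
  - have -> : i = j by apply: val_inj.
    by rewrite e_irr pi.
exists (fun i : 'I_n => nth x0 s i); split => //.
exact: (inj_from A).
Qed.

Lemma mkC6 (x0 : T) (s : seq T) : size s = 6 -> okp (cpat 6) 0 s -> has_induced_cycle e 6.
Proof. move=> Hs H; apply: (mkC x0 _ Hs H) => //; by vm_compute. Qed.
Lemma mkC7 (x0 : T) (s : seq T) : size s = 7 -> okp (cpat 7) 0 s -> has_induced_cycle e 7.
Proof. move=> Hs H; apply: (mkC x0 _ Hs H) => //; by vm_compute. Qed.

Lemma mkC4 a b c d : e a b -> e b c -> e c d -> e d a -> e a c = false -> e b d = false ->
  a != c -> b != d -> has_induced_cycle e 4.
Proof.
move=> Hab Hbc Hcd Hda Hac Hbd nac nbd.
exists (fun i : 'I_4 => nth a [:: a; b; c; d] i); split.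
- move=> [[|[|[|[|?]]]] Hi] [[|[|[|[|?]]]] Hj] //= E; try by apply: val_inj.
  all: subst; rewrite ?e_irr ?eqxx in Hab Hbc Hcd Hda nac nbd => //.
- move=> [[|[|[|[|?]]]] Hi] [[|[|[|[|?]]]] Hj] //=;
  by rewrite ?e_irr ?Hab ?Hbc ?Hcd ?Hda ?Hac ?Hbd ?(e_sym b a) ?(e_sym c b) ?(e_sym d c) ?(e_sym a d) ?(e_sym c a) ?(e_sym d b) ?Hab ?Hbc ?Hcd ?Hda ?Hac ?Hbd.
Qed.
End Checker.

Definition ords5 : seq 'I_5 :=
  [:: @Ordinal 5 0 isT; @Ordinal 5 1 isT; @Ordinal 5 2 isT; @Ordinal 5 3 isT; @Ordinal 5 4 isT].
Lemma mem_ords5 (a : 'I_5) : a \in ords5.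
Proof. by case: a => [[|[|[|[|[|?]]]]] Ha] //; rewrite !inE; apply/orP; (try by left; apply/eqP/val_inj); do ?(right; try by apply/orP; left; apply/eqP/val_inj); apply/eqP/val_inj. Qed.
Definition ex5 (P : 'I_5 -> bool) := has P ords5.
Definition all5 (P : 'I_5 -> bool) := all P ords5.
Definition sh' (i : 'I_5) (d : nat) : 'I_5 := Ordinal (ltn_pmod (i + d) (isT : 0 < 5)).
Lemma shE i d : sh i d = sh' i d.
Proof. by apply: val_inj; rewrite /= inordK // ltn_pmod. Qed.
Lemma ex5P (P : 'I_5 -> bool) : reflect (exists a, P a) (ex5 P).
Proof.
apply: (iffP hasP) => [[a _ Pa]|[a Pa]]; first by exists a.
by exists a; rewrite ?mem_ords5.
Qed.
Lemma all5P (P : 'I_5 -> bool) : reflect (forall a, P a) (all5 P).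
Proof.
apply: (iffP allP) => [H a|H a _]; last exact: H.
by apply: H; rewrite mem_ords5.
Qed.

Definition inT (i j : 'I_5) := (j == sh' i 4) || (j == i) || (j == sh' i 1).
Definition inB (i j : 'I_5) := (j == sh' i 3) || (j == sh' i 2).

Definition nogap (b : 'I_5 -> bool) := all5 (fun a => ~~ [&& b a, ~~ b (sh' a 1) & b (sh' a 2)]).
Definition creq (b : 'I_5 -> bool) := ex5 (fun a => [&& b a, ~~ b (sh' a 1), ~~ b (sh' a 2) & ~~ b (sh' a 3)]).
Definition dreq (b : 'I_5 -> bool) := ex5 (fun a => [&& b a, ~~ b (sh' a 1) & ~~ b (sh' a 2)]).
Definition c6a (bp bq : 'I_5 -> bool) := ex5 (fun x => [&& bq x, ~~ bq (sh' x 1), ~~ bq (sh' x 2), ~~ bp x, ~~ bp (sh' x 1) & bp (sh' x 2)]).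
Definition c6b (bp bq : 'I_5 -> bool) := ex5 (fun x => [&& bq x, ~~ bq (sh' x 1), ~~ bp x & bp (sh' x 1)]).
Definition goal3 (bp bq : 'I_5 -> bool) := ex5 (fun i =>
  (all5 (fun j => bp j == inT i j) && all5 (fun j => bq j == inB i j)) ||
  (all5 (fun j => bq j == inT i j) && all5 (fun j => bp j == inB i j))).
Definition hyps3 (bp bq : 'I_5 -> bool) (cp cq cm pth : bool) :=
  [&& ex5 bp, ex5 bq, nogap bp, nogap bq, creq bp ==> cp, creq bq ==> cq, ~~ (cp && cq),
   (cp || cq) ==> cm, cm ==> all5 (fun a => ~~ (bp a && bq a)),
   all5 (fun a => ~~ [&& bp a, bq a, bp (sh' a 2) & bq (sh' a 2)]),
   cm ==> (~~ c6a bp bq && ~~ c6a bq bp),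
   (~~ cm && (dreq bp || dreq bq)) ==> pth &
   pth ==> [&& ~~ c6b bp bq, ~~ c6b bq bp, ~~ c6a bp bq & ~~ c6a bq bp]].

Definition allb (f : bool -> bool) := f true && f false.
Lemma allbP f : allb f -> forall b, f b. Proof. by case/andP => ? ? []. Qed.
Definition prof (s : seq bool) (j : 'I_5) := nth false s j.

Lemma fincheck_all : allb (fun b0 => allb (fun b1 => allb (fun b2 => allb (fun b3 => allb (fun b4 =>
  allb (fun c0 => allb (fun c1 => allb (fun c2 => allb (fun c3 => allb (fun c4 =>
  allb (fun cp => allb (fun cq => allb (fun cm => allb (fun pth =>
  hyps3 (prof [:: b0; b1; b2; b3; b4]) (prof [:: c0; c1; c2; c3; c4]) cp cq cm pth ==>
  goal3 (prof [:: b0; b1; b2; b3; b4]) (prof [:: c0; c1; c2; c3; c4]))))))))))))))).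
Proof. vm_compute. reflexivity. Qed.

Lemma fincheck bp bq cp cq cm pth : hyps3 bp bq cp cq cm pth -> goal3 bp bq.
Proof.
have Ep : bp = prof [:: bp (@Ordinal 5 0 isT); bp (@Ordinal 5 1 isT); bp (@Ordinal 5 2 isT); bp (@Ordinal 5 3 isT); bp (@Ordinal 5 4 isT)].
  by apply: functional_extensionality => -[[|[|[|[|[|?]]]]] H] //=; congr bp; apply: val_inj.
have Eq : bq = prof [:: bq (@Ordinal 5 0 isT); bq (@Ordinal 5 1 isT); bq (@Ordinal 5 2 isT); bq (@Ordinal 5 3 isT); bq (@Ordinal 5 4 isT)].
  by apply: functional_extensionality => -[[|[|[|[|[|?]]]]] H] //=; congr bq; apply: val_inj.
rewrite Ep Eq; apply/implyP.
move: fincheck_all => /allbP/(_ (bp (@Ordinal 5 0 isT)))/allbP/(_ (bp (@Ordinal 5 1 isT)))/allbP/(_ (bp (@Ordinal 5 2 isT)))/allbP/(_ (bp (@Ordinal 5 3 isT)))/allbP/(_ (bp (@Ordinal 5 4 isT)))/allbP/(_ (bq (@Ordinal 5 0 isT)))/allbP/(_ (bq (@Ordinal 5 1 isT)))/allbP/(_ (bq (@Ordinal 5 2 isT)))/allbP/(_ (bq (@Ordinal 5 3 isT)))/allbP/(_ (bq (@Ordinal 5 4 isT)))/allbP/(_ (cp))/allbP/(_ (cq))/allbP/(_ (cm))/allbP/(_ (pth)).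
by [].
Qed.

Section Main.
Variables (T : finType) (e : rel T) (e_sym : symmetric e) (e_irr : irreflexive e)
  (noP7 : ~ has_induced_path e 7) (noC4 : ~ has_induced_cycle e 4)
  (noC6 : ~ has_induced_cycle e 6) (noC7 : ~ has_induced_cycle e 7)
  (v : 'I_5 -> T) (hC : induced_cycle e v)
  (K : {set T}) (hK : is_component_S0 e v K) (hKnc : ~ is_clique e K).

Lemma hC2 i j : e (v i) (v j) = (val j == (val i).+1 %% 5) || (val i == (val j).+1 %% 5).
Proof. exact: hC.2. Qed.
Lemma vinj : injective v. Proof. exact: hC.1. Qed.

Lemma vVC j : v j \in VC v. Proof. by apply/imsetP; exists j. Qed.

Lemma K_sub k : k \in K -> k \in S0 e v.
Proof.
case: hK => x0 Hx0 ->; rewrite inE => /connectP [p Hp ->].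
elim: p x0 Hx0 Hp => //= y p IH x Hx /andP [Hxy Hp].
by apply: IH Hp; case/and3P: Hxy.
Qed.

Lemma Kv k : k \in K -> forall j, e k (v j) = false.
Proof.
move/K_sub; rewrite inE => /andP [_ /eqP E] j; apply/negP => H.
have : v j \in [set y in VC v | e k y] by rewrite inE H andbT vVC.
by rewrite E inE.
Qed.
Lemma Kv' k : k \in K -> forall j, e (v j) k = false.
Proof. by move=> kK j; rewrite e_sym Kv. Qed.
Lemma KnVC k : k \in K -> k \notin VC v.
Proof. by move/K_sub; rewrite inE => /andP []. Qed.

Lemma rsym : connect_sym (rS0 e v).
Proof.
apply: sym_connect_sym => a b; rewrite /rS0 e_sym.
by case: (a \in _); case: (b \in _); rewrite ?andbF ?andbT.
Qed.

Lemma NK_K x : x \in NK e K -> x \notin K.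
Proof. by rewrite inE => /andP []. Qed.
Lemma NK_nb x : x \in NK e K -> exists2 k, k \in K & e x k.
Proof. by rewrite inE => /andP [_ /existsP [k /andP [kK xk]]]; exists k. Qed.
Lemma NK_VC x : x \in NK e K -> x \notin VC v.
Proof.
move=> xN; have [k kK xk] := NK_nb xN; apply/imsetP => -[j _ E].
by move: xk; rewrite E Kv'.
Qed.
Lemma NK_C x : x \in NK e K -> exists j, e x (v j).
Proof.
move=> xN; case: (boolP [exists j, e x (v j)]) => [/existsP //|].
rewrite negb_exists => /forallP H; exfalso.
have [k kK xk] := NK_nb xN.
have xS : x \in S0 e v.
  rewrite inE NK_VC //=; apply/eqP/setP => y; rewrite !inE.
  case: (boolP (y \in VC v)) => [/imsetP [j _ ->]|] //=.
  by rewrite (negbTE (H j)).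
have kS := K_sub kK.
move: (NK_K xN); apply/negP; apply/negPn.
case: hK => x0 Hx0 EK; move: kK; rewrite EK !inE => c.
apply: (connect_trans c); apply: connect1.
by rewrite /rS0 e_sym xk kS xS.
Qed.

Lemma cross (P : pred T) k0 k : k0 \in K -> k \in K -> P k0 -> ~~ P k ->
  exists y z, [/\ y \in K, z \in K, e y z, P y & ~~ P z].
Proof.
case: hK => x0 Hx0 EK; rewrite EK !inE => c0 c P0 nP.
have : connect (rS0 e v) k0 k by apply: connect_trans c; rewrite rsym.
case/connectP => p Hp Ek; subst k.
elim: p k0 c0 P0 Hp {c} nP => [|y p IH] k0 c0 P0 /=; first by rewrite P0.
case/andP => r0 Hp nP.
have cy : connect (rS0 e v) x0 y by apply: connect_trans c0 (connect1 r0).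
case: (boolP (P y)) => Py; first exact: IH Py Hp nP.
exists k0, y; split => //; rewrite ?EK ?inE //.
by case/and3P: r0.
Qed.

Ltac fin5 a := let m := fresh "m" in let Hm := fresh "Hm" in
  destruct a as [m Hm]; do 5 (destruct m as [|m]; [vm_compute; first [reflexivity | by [] | intros; discriminate] |]);
  exfalso; clear -Hm; move: Hm; by [].

Ltac negs := repeat match goal with H : is_true (~~ e ?x ?y) |- _ => move/negbTE: H => H end.
Ltac symhyps := negs; repeat match goal with
 | H : is_true (e ?x ?y) |- _ => lazymatch goal with
     | _ : is_true (e y x) |- _ => fail | _ => have : e y x by rewrite e_sym end; move=> ?
 | H : e ?x ?y = false |- _ => lazymatch goal with
     | _ : e y x = false |- _ => fail | _ => have : e y x = false by rewrite e_sym end; move=> ?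
 end.
Ltac rwall := repeat match goal with
 | H : is_true (e ?x ?y) |- context [e ?x ?y] => rewrite H
 | H : e ?x ?y = false |- context [e ?x ?y] => rewrite H
 | H : is_true (?k \in ?KK) |- context [e ?k (v _)] => rewrite (Kv H)
 | H : is_true (?k \in ?KK) |- context [e (v _) ?k] => rewrite (Kv' H)
 end.
Ltac crunch := symhyps; cbn [okp okrow]; rewrite ?hC2; rwall.

Lemma complete3 a x : x \in NK e K -> e x (v a) -> e x (v (sh' a 1)) = false ->
  e x (v (sh' a 2)) = false -> e x (v (sh' a 3)) = false -> complete_to e x K.
Proof.
move=> xN h0 h1 h2 h3 k kK; apply: contraT => nk.
have [k0 k0K xk0] := NK_nb xN.
have [y [z [yK zK yz xy nxz]]] := cross (P := e x) k0K kK xk0 nk.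
exfalso; apply: noP7; apply: (mkP7 e_sym e_irr x (s := [:: z; y; x; v a; v (sh' a 1); v (sh' a 2); v (sh' a 3)])) => //.
crunch; fin5 a.
Qed.

Lemma dist2 a x : x \in NK e K -> e x (v a) -> e x (v (sh' a 1)) = false ->
  e x (v (sh' a 2)) = false -> forall k, k \in K ->
  e x k \/ exists2 k1, k1 \in K & e x k1 && e k1 k.
Proof.
move=> xN h0 h1 h2 k kK.
pose P := fun y => e x y || [exists k1 in K, e x k1 && e k1 y].
case: (boolP (P k)) => [/orP [->|/existsP [k1 /andP [k1K H]]]|nPk]; [by left|by right; exists k1|].
exfalso; have [k0 k0K xk0] := NK_nb xN.
have P0 : P k0 by rewrite /P xk0.
have [y [z [yK zK yz Py nPz]]] := cross (P := P) k0K kK P0 nPk.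
move: nPz; rewrite /P negb_or negb_exists => /andP [nxz /forallP nz].
case/orP: Py => [xy|/existsP [k1 /andP [k1K /andP [xk1 k1y]]]].
  by move: (nz y); rewrite yK xy yz.
have k1z : e k1 z = false by apply: negbTE; move: (nz k1); rewrite k1K xk1.
have xy : e x y = false by apply: negbTE; apply/negP => xy; move: (nz y); rewrite yK xy yz.
apply: noP7; apply: (mkP7 e_sym e_irr x (s := [:: z; y; k1; x; v a; v (sh' a 1); v (sh' a 2)])) => //.
crunch; fin5 a.
Qed.

Lemma bothcomp p q : p \in NK e K -> q \in NK e K -> p != q -> e p q = false ->
  complete_to e p K -> complete_to e q K -> False.
Proof.
move=> pN qN npq pq cp cq.
have [a [c [aK cK ac nac]]] : exists a c, [/\ a \in K, c \in K, a != c & e a c = false].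
  case: (boolP [exists a in K, exists c in K, (a != c) && ~~ e a c]) =>
    [/existsP [a /andP [aK /existsP [c /and3P [cK ac nac]]]]|H].
    by exists a, c; split => //; apply: negbTE.
  exfalso; apply: hKnc => x y xK yK xy.
  move: H; rewrite negb_exists => /forallP /(_ x); rewrite xK /= negb_exists => /forallP /(_ y).
  by rewrite yK xy /= => /negPn.
apply: noC4; apply: (mkC4 e_sym e_irr (a := p) (b := a) (c := q) (d := c)) => //.
- exact: cp.
- by rewrite e_sym; apply: cq.
- exact: cq.
- by rewrite e_sym; apply: cp.
Qed.

Lemma share p q k a : p != q -> e p q = false -> k \in K -> e p k -> e q k ->
  e p (v a) -> e q (v a) -> False.
Proof.
move=> npq pq kK pk qk pa qa.
apply: noC4; apply: (mkC4 e_sym e_irr (a := p) (b := k) (c := q) (d := v a)) => //.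
- by rewrite e_sym.
- by rewrite e_sym.
- by rewrite Kv.
- by apply: contraNneq (KnVC kK) => ->; apply: vVC.
Qed.

Lemma vne a : v a != v (sh' a 2).
Proof. rewrite (inj_eq vinj); fin5 a. Qed.

Lemma share2 p q a : p != q -> e p q = false -> e p (v a) -> e q (v a) ->
  e p (v (sh' a 2)) -> e q (v (sh' a 2)) -> False.
Proof.
move=> npq pq pa qa pb qb.
apply: noC4; apply: (mkC4 e_sym e_irr (a := p) (b := v a) (c := q) (d := v (sh' a 2))) => //.
- by rewrite e_sym.
- by rewrite e_sym.
- rewrite hC2; fin5 a.
- exact: vne.
Qed.

Lemma gapC4 x a : x \notin VC v -> e x (v a) -> e x (v (sh' a 1)) = false ->
  e x (v (sh' a 2)) -> False.
Proof.
move=> xV h0 h1 h2.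
apply: noC4; apply: (mkC4 e_sym e_irr (a := x) (b := v a) (c := v (sh' a 1)) (d := v (sh' a 2))) => //.
- rewrite hC2; fin5 a.
- rewrite hC2; fin5 a.
- by rewrite e_sym.
- rewrite hC2; fin5 a.
- by apply: contraNneq xV => ->; apply: vVC.
- exact: vne.
Qed.

Lemma L_c6a p q k x : e p q = false -> k \in K -> e p k -> e q k ->
  e q (v x) -> e q (v (sh' x 1)) = false -> e q (v (sh' x 2)) = false ->
  e p (v x) = false -> e p (v (sh' x 1)) = false -> e p (v (sh' x 2)) -> False.
Proof.
move=> pq kK pk qk h1 h2 h3 h4 h5 h6.
apply: noC6; apply: (mkC6 e_sym e_irr p (s := [:: p; k; q; v x; v (sh' x 1); v (sh' x 2)])) => //.
crunch; fin5 x.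
Qed.

Lemma L_c6b p q k1 k2 x : e p q = false -> k1 \in K -> k2 \in K -> e p k1 -> e k1 k2 -> e k2 q ->
  e p k2 = false -> e k1 q = false ->
  e q (v x) -> e q (v (sh' x 1)) = false -> e p (v x) = false -> e p (v (sh' x 1)) -> False.
Proof.
move=> pq k1K k2K pk1 k12 k2q pk2 k1q h1 h2 h3 h4.
apply: noC6; apply: (mkC6 e_sym e_irr p (s := [:: p; k1; k2; q; v x; v (sh' x 1)])) => //.
crunch; fin5 x.
Qed.

Lemma L_c7 p q k1 k2 x : e p q = false -> k1 \in K -> k2 \in K -> e p k1 -> e k1 k2 -> e k2 q ->
  e p k2 = false -> e k1 q = false ->
  e q (v x) -> e q (v (sh' x 1)) = false -> e q (v (sh' x 2)) = false ->
  e p (v x) = false -> e p (v (sh' x 1)) = false -> e p (v (sh' x 2)) -> False.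
Proof.
move=> pq k1K k2K pk1 k12 k2q pk2 k1q h1 h2 h3 h4 h5 h6.
apply: noC7; apply: (mkC7 e_sym e_irr p (s := [:: p; k1; k2; q; v x; v (sh' x 1); v (sh' x 2)])) => //.
crunch; fin5 x.
Qed.

Lemma core3 p q : p \in NK e K -> q \in NK e K -> p != q -> e p q = false ->
  goal3 (fun j => e p (v j)) (fun j => e q (v j)).
Proof.
move=> pN qN npq pq.
have qp : e q p = false by rewrite e_sym.
have npq' : q != p by rewrite eq_sym.
have compP : forall x, x \in NK e K -> creq (fun j => e x (v j)) ==> [forall y in K, e x y].
  move=> x xN; apply/implyP => /ex5P [a /and4P [h0 h1 h2 h3]]; apply/forallP => y; apply/implyP => yK.
  exact: (complete3 (a := a) xN h0 (negbTE h1) (negbTE h2) (negbTE h3) yK).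
have ngP : forall x, x \in NK e K -> nogap (fun j => e x (v j)).
  move=> x xN; apply/all5P => a; apply/negP => /and3P [h0 h1 h2].
  exact: (gapC4 (NK_VC xN) h0 (negbTE h1) h2).
have nzP : forall x, x \in NK e K -> ex5 (fun j => e x (v j)).
  by move=> x xN; have [j hj] := NK_C xN; apply/ex5P; exists j.
apply: (@fincheck _ _ [forall y in K, e p y] [forall y in K, e q y]
   [exists k in K, e p k && e q k]
   [exists k1 in K, exists k2 in K, [&& e p k1, e k1 k2, e k2 q, ~~ e p k2 & ~~ e k1 q]]).
rewrite /hyps3 nzP // nzP // ngP // ngP // compP // compP //=.
apply/andP; split.
  apply/negP => /andP [/forallP c1 /forallP c2].
  by apply: (bothcomp pN qN npq pq) => y yK; [move: (c1 y) | move: (c2 y)]; rewrite yK.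
apply/andP; split.
  apply/implyP => /orP [/forallP c1|/forallP c2]; apply/existsP.
    have [k kK qk] := NK_nb qN; exists k; rewrite kK qk andbT /=.
    by move: (c1 k); rewrite kK.
  have [k kK pk] := NK_nb pN; exists k; rewrite kK pk /=.
  by move: (c2 k); rewrite kK.
apply/andP; split.
  apply/implyP => /existsP [k /andP [kK /andP [pk qk]]]; apply/all5P => a; apply/negP => /andP [pa qa].
  exact: (share npq pq kK pk qk pa qa).
apply/andP; split.
  apply/all5P => a; apply/negP => /and4P [pa qa pb qb].
  exact: (share2 npq pq pa qa pb qb).
apply/andP; split.
  apply/implyP => /existsP [k /andP [kK /andP [pk qk]]].
  apply/andP; split; apply/negP => /ex5P [x /and5P [h1 h2 h3 h4 /andP [h5 h6]]].
    exact: (L_c6a pq kK pk qk h1 (negbTE h2) (negbTE h3) (negbTE h4) (negbTE h5) h6).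
  exact: (L_c6a qp kK qk pk h1 (negbTE h2) (negbTE h3) (negbTE h4) (negbTE h5) h6).
apply/andP; split.
  apply/implyP => /andP [ncm Hd]; move: ncm; rewrite negb_exists => /forallP ncm.
  case/orP: Hd => /ex5P [a /and3P [h0 h1 h2]].
    have [kq kqK qkq] := NK_nb qN.
    case: (dist2 pN h0 (negbTE h1) (negbTE h2) kqK) => [pkq|[k1 k1K /andP [pk1 k1kq]]].
      by move: (ncm kq); rewrite kqK pkq qkq.
    apply/existsP; exists k1; rewrite k1K /=; apply/existsP; exists kq.
    rewrite kqK pk1 k1kq /= (e_sym kq q) qkq /=.
    apply/andP; split; apply/negP => H.
      by move: (ncm kq); rewrite kqK H qkq.
    by move: (ncm k1); rewrite k1K pk1 (e_sym q k1) H.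
  have [kp kpK pkp] := NK_nb pN.
  case: (dist2 qN h0 (negbTE h1) (negbTE h2) kpK) => [qkp|[k1 k1K /andP [qk1 k1kp]]].
    by move: (ncm kp); rewrite kpK pkp qkp.
  apply/existsP; exists kp; rewrite kpK /=; apply/existsP; exists k1.
  rewrite k1K pkp (e_sym kp k1) k1kp /= (e_sym k1 q) qk1 /=.
  apply/andP; split; apply/negP => H.
    by move: (ncm k1); rewrite k1K H qk1.
  by move: (ncm kp); rewrite kpK pkp (e_sym q kp) H.
apply/implyP => /existsP [k1 /andP [k1K /existsP [k2 /andP [k2K /and5P [pk1 k12 k2q npk2 nk1q]]]]].
have qk2 : e q k2 by rewrite e_sym.
have k21 : e k2 k1 by rewrite e_sym.
have k1p : e k1 p by rewrite e_sym.
have nqk1 : e q k1 = false by rewrite e_sym; apply: negbTE.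
have nk2p : e k2 p = false by rewrite e_sym; apply: negbTE.
apply/and4P; split; apply/negP.
- case/ex5P => x /and4P [h1 h2 h3 h4].
  exact: (L_c6b pq k1K k2K pk1 k12 k2q (negbTE npk2) (negbTE nk1q) h1 (negbTE h2) (negbTE h3) h4).
- case/ex5P => x /and4P [h1 h2 h3 h4].
  exact: (L_c6b qp k2K k1K qk2 k21 k1p nqk1 nk2p h1 (negbTE h2) (negbTE h3) h4).
- case/ex5P => x /and5P [h1 h2 h3 h4 /andP [h5 h6]].
  exact: (L_c7 pq k1K k2K pk1 k12 k2q (negbTE npk2) (negbTE nk1q) h1 (negbTE h2) (negbTE h3) (negbTE h4) (negbTE h5) h6).
- case/ex5P => x /and5P [h1 h2 h3 h4 /andP [h5 h6]].
  exact: (L_c7 qp k2K k1K qk2 k21 k1p nqk1 nk2p h1 (negbTE h2) (negbTE h3) (negbTE h4) (negbTE h5) h6).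
Qed.

Lemma profS x (X : {set T}) : x \in Sset e v X -> forall j, e x (v j) = (v j \in X).
Proof. by rewrite inE => /andP [_ /eqP E] j; rewrite -E inE vVC. Qed.
Lemma SnVC x (X : {set T}) : x \in Sset e v X -> x \notin VC v.
Proof. by rewrite inE => /andP []. Qed.
Lemma memS x (X : {set T}) : x \notin VC v -> {subset X <= VC v} ->
  (forall j, e x (v j) = (v j \in X)) -> x \in Sset e v X.
Proof.
move=> xV sub hx; rewrite inE xV /=; apply/eqP/setP => y; rewrite inE.
case: (boolP (y \in VC v)) => [/imsetP [j _ ->]|yn] /=; first by rewrite hx.
by apply/esym/negbTE; apply: contra yn => /sub.
Qed.

Lemma TneB i i' : exists j, inT i j != inB i' j.
Proof.
have : all5 (fun i => all5 (fun i' => ex5 (fun j => inT i j != inB i' j))) by vm_compute.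
by move/all5P/(_ i)/all5P/(_ i')/ex5P.
Qed.
Lemma TneB2 i i' : exists j, inT i' j != ((j == sh' i 3) || (j == sh' i 4)).
Proof.
have : all5 (fun i => all5 (fun i' => ex5 (fun j => inT i' j != ((j == sh' i 3) || (j == sh' i 4))))) by vm_compute.
by move/all5P/(_ i)/all5P/(_ i')/ex5P.
Qed.

Lemma main_sec :
  (forall (i : 'I_5) p, p \in NK e K -> p \in S2 e v i -> complete_to e p K) /\
  (forall i : 'I_5, NK e K :&: S3 e v i = set0 \/ NK e K :&: S3 e v (sh i 2) = set0) /\
  (forall p q, p \in NK e K -> q \in NK e K -> p != q -> ~~ e p q ->
     exists i : 'I_5, (p \in S3 e v i /\ q \in S2 e v i) \/
                      (q \in S3 e v i /\ p \in S2 e v i)) /\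
  (forall i : 'I_5, ~ exists p p' q q',
     [/\ p \in NK e K, p' \in NK e K, q \in NK e K & q' \in NK e K] /\
     [/\ p \in S3 e v i, q \in S2 e v i, p' \in S3 e v (sh i 1) &
         q' \in Sset e v [set v (sh i 3); v (sh i 4)]]).
Proof.
split.
  move=> i p pN pS; have hp := profS pS.
  apply: (complete3 (a := sh' i 3) pN); rewrite hp !inE !(inj_eq vinj) !shE; fin5 i.
split.
  move=> i.
  case: (set_0Vmem (NK e K :&: S3 e v i)) => [->|[p]]; first by left.
  rewrite inE => /andP [pN pS].
  case: (set_0Vmem (NK e K :&: S3 e v (sh i 2))) => [->|[q]]; first by right.
  rewrite inE => /andP [qN qS]; exfalso.
  have hp : forall j, e p (v j) = inT i j.
    by move=> j; rewrite (profS pS) !inE !(inj_eq vinj) !shE.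
  have hq : forall j, e q (v j) = inT (sh' i 2) j.
    by move=> j; rewrite (profS qS) !inE !(inj_eq vinj) !shE.
  have npq : p != q.
    apply/eqP => E; move: (hp i); rewrite E hq; fin5 i.
  case: (boolP (e p q)) => [pq|/negbTE pq].
    apply: noC4; apply: (mkC4 e_sym e_irr (a := p) (b := v (sh' i 4)) (c := v (sh' i 3)) (d := q)).
    - rewrite hp; fin5 i.
    - rewrite hC2; fin5 i.
    - rewrite e_sym hq; fin5 i.
    - by rewrite e_sym.
    - rewrite hp; fin5 i.
    - rewrite e_sym hq; fin5 i.
    - by apply: contraNneq (SnVC pS) => ->; apply: vVC.
    - by apply: contraNneq (SnVC qS) => <-; apply: vVC.
  have := core3 pN qN npq pq.
  case/ex5P => i' /orP [/andP [_ /all5P Hq]|/andP [_ /all5P Hp]].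
    have [j Hj] := TneB (sh' i 2) i'.
    by move: (Hq j) => /= /eqP; rewrite hq => E; rewrite E eqxx in Hj.
  have [j Hj] := TneB i i'.
  by move: (Hp j) => /= /eqP; rewrite hp => E; rewrite E eqxx in Hj.
split.
  move=> p q pN qN npq /negbTE pq.
  have := core3 pN qN npq pq.
  case/ex5P => i /orP [/andP [/all5P Hp /all5P Hq]|/andP [/all5P Hq /all5P Hp]]; exists i; [left|right]; split.
  - apply: memS (NK_VC pN) _ _.
      by move=> y; rewrite !inE; case/orP; [case/orP|]; move/eqP=> ->; apply: vVC.
    by move=> j; move: (Hp j) => /= /eqP ->; rewrite /inT !inE !(inj_eq vinj) !shE.
  - apply: memS (NK_VC qN) _ _.
      by move=> y; rewrite !inE; case/orP; move/eqP=> ->; apply: vVC.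
    by move=> j; move: (Hq j) => /= /eqP ->; rewrite /inB !inE !(inj_eq vinj) !shE.
  - apply: memS (NK_VC qN) _ _.
      by move=> y; rewrite !inE; case/orP; [case/orP|]; move/eqP=> ->; apply: vVC.
    by move=> j; move: (Hq j) => /= /eqP ->; rewrite /inT !inE !(inj_eq vinj) !shE.
  - apply: memS (NK_VC pN) _ _.
      by move=> y; rewrite !inE; case/orP; move/eqP=> ->; apply: vVC.
    by move=> j; move: (Hp j) => /= /eqP ->; rewrite /inB !inE !(inj_eq vinj) !shE.
move=> i [p [p' [q [q' [[pN p'N qN q'N] [pS qS p'S q'S]]]]]].
have hq : forall j, e q (v j) = inB i j.
  by move=> j; rewrite (profS qS) !inE !(inj_eq vinj) !shE.
have hq2 : forall j, e q' (v j) = ((j == sh' i 3) || (j == sh' i 4)).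
  by move=> j; rewrite (profS q'S) !inE !(inj_eq vinj) !shE.
have nqq : q != q'.
  apply/eqP => E; move: (hq (sh' i 2)); rewrite E hq2; fin5 i.
case: (boolP (e q q')) => [qq|/negbTE qq].
  apply: noC6; apply: (mkC6 e_sym e_irr q (s := [:: q; q'; v (sh' i 4); v i; v (sh' i 1); v (sh' i 2)])) => //.
  crunch; rewrite ?hq ?hq2; fin5 i.
have := core3 qN q'N nqq qq.
case/ex5P => i' /orP [/andP [/all5P Hq _]|/andP [/all5P Hq _]].
  have [j Hj] := TneB i' i.
  by move: (Hq j) => /= /eqP; rewrite hq => E; rewrite E eqxx in Hj.
have [j Hj] := TneB2 i i'.
by move: (Hq j) => /= /eqP; rewrite hq2 => E; rewrite E eqxx in Hj.
Qed.

End Main.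

Unset Implicit Arguments.

Theorem lemma9p1 (T : finType) (e : rel T)
  (e_sym : symmetric e) (e_irr : irreflexive e)
  (noP7 : ~ has_induced_path e 7) (noC4 : ~ has_induced_cycle e 4)
  (noC6 : ~ has_induced_cycle e 6) (noC7 : ~ has_induced_cycle e 7)
  (v : 'I_5 -> T) (hC : induced_cycle e v)
  (K : {set T}) (hK : is_component_S0 e v K) (hKnc : ~ is_clique e K) :
  (* (1) *)
  (forall (i : 'I_5) p, p \in NK e K -> p \in S2 e v i -> complete_to e p K) /\
  (* (2) *)
  (forall i : 'I_5, NK e K :&: S3 e v i = set0 \/ NK e K :&: S3 e v (sh i 2) = set0) /\
  (* (3) *)
  (forall p q, p \in NK e K -> q \in NK e K -> p != q -> ~~ e p q ->
     exists i : 'I_5, (p \in S3 e v i /\ q \in S2 e v i) \/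
                      (q \in S3 e v i /\ p \in S2 e v i)) /\
  (* (4) *)
  (forall i : 'I_5, ~ exists p p' q q',
     [/\ p \in NK e K, p' \in NK e K, q \in NK e K & q' \in NK e K] /\
     [/\ p \in S3 e v i, q \in S2 e v i, p' \in S3 e v (sh i 1) &
         q' \in Sset e v [set v (sh i 3); v (sh i 4)]]).
Proof. by apply: main_sec. Qed.
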